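(* Let $K=2$ and suppose that for every horizon $T$ (a multiple of $100$) a valid pair $(\eta,\gamma)=(\eta_T,\gamma_T)$ in the non-trivial regime is chosen. Then there exists $T_0$ such that for all $T\ge T_0$, WSU-UX run on the two-phase loss sequence satisfies $\mathbb{E}[\pi_{t,1}]\le \frac{1}{KT}$ for every round $t$ with $\frac{T_1}{2}\le t\le T_1$.
   Context: WSU-UX. Fix integers $K\ge 2$ and $T\ge 1$ and hyperparameters $\eta,\gamma$. The pair $(\eta,\gamma)$ is called valid if $\eta,\gamma\in(0,1/2)$ and $\eta K/\gamma\le 1/2$. Given a fixed loss sequence $\ell_t\in[0,1]^K$, WSU-UX sets $\pi_{1,i}=1/K$ and in each round $t$: forms $\tilde\pi_{t,i}=(1-\gamma)\pi_{t,i}+\gamma/K$; draws $I_t$ with $\Pr(I_t=i\mid\mathcal F_{t-1})=\tilde\pi_{t,i}$; sets $\hat\ell_{t,i}=\ell_{t,i}\mathbf 1[I_t=i]/\tilde\pi_{t,i}$; and updates $\pi_{t+1,i}=\pi_{t,i}\bigl(1-\eta(\hat\ell_{t,i}-\sum_{j}\pi_{t,j}\hat\ell_{t,j})\bigr)$; $\mathcal F_t$ is the history generated by $I_1,\dots,I_t$. Non-trivial regime: $\eta\ge T^{-2/3}$ and $\gamma\le T^{-1/3}$. Two-phase loss sequence ($K=2$, $T$ a multiple of $100$, $T_1=T/100$): $\ell_{t,1}=1,\ell_{t,2}=0$ for $1\le t\le T_1$ and $\ell_{t,1}=0,\ell_{t,2}=1$ for $T_1<t\le T$. *)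

(* Defs.v *)
From HB Require Import structures.
From mathcomp Require Import all_boot all_order all_algebra.
From mathcomp Require Import all_classical all_reals all_analysis.
Set Implicit Arguments. Unset Strict Implicit. Unset Printing Implicit Defensive.
Import Order.TTheory GRing.Theory Num.Theory.
Local Open Scope ring_scope.

Section WSUUX.
Variables (R : realType) (K : nat).

(* A probability-like weight vector over the K arms (arms are 'I_K;
   arm i of the paper is the ordinal i-1). *)
Definition weights := {ffun 'I_K -> R}.

Definition wsu_tilde (gamma : R) (p : weights) (i : 'I_K) : R :=
  (1 - gamma) * p i + gamma / K%:R.

Definition wsu_lhat (gamma : R) (l : 'I_K -> R) (p : weights) (It : 'I_K)
  (i : 'I_K) : R :=
  l i * (It == i)%:R / wsu_tilde gamma p i.

Definition wsu_update (eta gamma : R) (l : 'I_K -> R) (p : weights)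
  (It : 'I_K) : weights :=
  [ffun i => p i * (1 - eta * (wsu_lhat gamma l p It i
                                - \sum_(j < K) p j * wsu_lhat gamma l p It j))].

Definition wsu_init : weights := [ffun => 1 / K%:R].

(* Running the algorithm from round s with weights p along the history
   h = [:: I_s; I_(s+1); ...] returns (probability of that history, given
   the past, i.e. the product of tilde pi_{r, I_r}, and the weights after it). *)
Fixpoint wsu_run (eta gamma : R) (loss : nat -> 'I_K -> R) (s : nat)
  (p : weights) (h : seq 'I_K) : R * weights :=
  match h with
  | [::] => (1, p)
  | i :: h' =>
      let r := wsu_run eta gamma loss s.+1 (wsu_update eta gamma (loss s) p i) h' in
      (wsu_tilde gamma p i * r.1, r.2)
  end.

(* E[ pi_{t,i} ] for t >= 1: expectation over histories I_1, ..., I_{t-1}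
   (each drawn with Pr(I_r = j | F_{r-1}) = tilde pi_{r,j}). *)
Definition wsu_expected_weight (eta gamma : R) (loss : nat -> 'I_K -> R)
  (t : nat) (i : 'I_K) : R :=
  \sum_(h : (t.-1).-tuple 'I_K)
     (wsu_run eta gamma loss 1 wsu_init h).1 * (wsu_run eta gamma loss 1 wsu_init h).2 i.

End WSUUX.

Definition wsu_valid (R : realType) (K : nat) (eta gamma : R) : Prop :=
  [/\ 0 < eta < 1/2, 0 < gamma < 1/2 & eta * K%:R / gamma <= 1/2].

Definition wsu_nontrivial (R : realType) (T : nat) (eta gamma : R) : Prop :=
  (T%:R `^ (- (2 / 3)) <= eta) /\ (gamma <= T%:R `^ (- (1 / 3))).

(* Two-phase loss sequence for K = 2 with T_1 = T / 100 (rounds t >= 1):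
   arm 1 (ord0) has loss 1 and arm 2 loss 0 for t <= T_1, then swapped. *)
Definition two_phase_loss (R : realType) (T : nat) (t : nat) (i : 'I_2) : R :=
  if (t <= T %/ 100)%N then (if i == ord0 then 1 else 0)
  else (if i == ord0 then 0 else 1).

(* Main.v *)
Require Import Defs.
From HB Require Import structures.
From mathcomp Require Import all_boot all_order all_algebra.
From mathcomp Require Import all_classical all_reals all_analysis.
From mathcomp Require Import ring lra.
Import Order.TTheory GRing.Theory Num.Theory.
Local Open Scope ring_scope.
Set Implicit Arguments. Unset Strict Implicit.
From mathcomp Require Import zify.

Lemma lift00 : lift ord0 ord0 = ord_max :> 'I_2.
Proof. exact: val_inj. Qed.

Lemma ordP2 (i : 'I_2) : i = ord0 \/ i = ord_max.
Proof. case: i => [[|[|k]] Hk]; [left|right|]; try exact: val_inj; by []. Qed.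

Lemma sum2 (R : realType) (f : 'I_2 -> R) : \sum_(i < 2) f i = f ord0 + f ord_max.
Proof. by rewrite !big_ord_recl big_ord0 lift00 addr0. Qed.

Section Core.
Variables (R : realType) (e g : R) (l : 'I_2 -> R) (p : weights R 2).
Hypothesis l0 : l ord0 = 1.
Hypothesis l1 : l ord_max = 0.

Lemma upd_1 : wsu_update e g l p ord_max = p.
Proof.
apply/ffunP => i; rewrite ffunE /wsu_lhat sum2 l0 l1 /=.
case: (ordP2 i) => ->; rewrite /= ?l0 ?l1; by rewrite !(mul0r, mulr0, subr0, addr0, sub0r, oppr0, mulr1).
Qed.

Lemma upd_00 : wsu_update e g l p ord0 ord0 =
   p ord0 * (1 - e * ((1 - p ord0) / wsu_tilde g p ord0)).
Proof.
rewrite ffunE /wsu_lhat sum2 l0 l1 /= !(mul0r, mulr0, subr0, addr0, sub0r, oppr0, mulr1, mul1r).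
congr (_ * (1 - e * _)); by rewrite mulrBl mul1r.
Qed.

Lemma upd_0max : wsu_update e g l p ord0 ord_max =
   p ord_max * (1 + e * (p ord0 / wsu_tilde g p ord0)).
Proof.
rewrite ffunE /wsu_lhat sum2 l0 l1 /= !(mul0r, mulr0, subr0, addr0, sub0r, oppr0, mulr1, mul1r).
by rewrite mulrN opprK.
Qed.
Definition Inv (p : weights R 2) := 0 <= p ord0 <= 1/2 /\ p ord0 + p ord_max = 1.

Hypotheses (e0 : 0 < e) (g0 : 0 < g) (g1 : g < 1/2) (eg : e * 2%:R / g <= 1/2).

Ltac prep := have e0' := e0; have g0' := g0; have g1' := g1; have eg' := eg.

Lemma t0_pos (H : Inv p) : g / 4 <= wsu_tilde g p ord0.
Proof. prep. case: H => /andP[Ha Hb] Hs; rewrite /wsu_tilde.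
have : 0 <= (1 - g) * p ord0 by apply: mulr_ge0; lra.
lra. Qed.

Lemma e_le : e <= g / 4.
Proof. prep. move: eg; rewrite ler_pdivrMr // => h. lra. Qed.
Lemma inv_step (H : Inv p) : Inv (wsu_update e g l p ord0)
   /\ wsu_update e g l p ord0 ord0 <= p ord0.
Proof. prep.
have ht := t0_pos H; have he := e_le.
have tp : 0 < wsu_tilde g p ord0 by lra.
case: H => /andP[Ha Hb] Hs.
have hc : 0 <= (1 - p ord0) / wsu_tilde g p ord0 by apply: divr_ge0; lra.
have hc1 : e * ((1 - p ord0) / wsu_tilde g p ord0) <= 1.
  rewrite mulrA ler_pdivrMr // mul1r; nra.
have hec : 0 <= e * ((1 - p ord0) / wsu_tilde g p ord0) by apply: mulr_ge0; lra.
rewrite /Inv upd_00 upd_0max; split; last by nra.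
split; first by apply/andP; split; nra.
have -> : p ord_max = 1 - p ord0 by lra.
by field; apply/negbT/gt_eqF; lra.
Qed.

Lemma exp_step (H : Inv p) :
  wsu_tilde g p ord0 * wsu_update e g l p ord0 ord0
  + wsu_tilde g p ord_max * wsu_update e g l p ord_max ord0
  = p ord0 - e * p ord0 * p ord_max.
Proof. prep.
have ht := t0_pos H.
have tp : 0 < wsu_tilde g p ord0 by lra.
rewrite upd_1 upd_00.
case: H => /andP[Ha Hb] Hs.
have hm : p ord_max = 1 - p ord0 by lra.
move: tp; rewrite /wsu_tilde hm => tp.
by field; apply/negbT/gt_eqF; lra.
Qed.
End Core.

Definition Fv (R : realType) (e g : R) (loss : nat -> 'I_2 -> R) (n s : nat)
  (p : weights R 2) : R :=
  \sum_(h : n.-tuple 'I_2)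
    (wsu_run e g loss s p h).1 * (wsu_run e g loss s p h).2 ord0.

Lemma Fv0 (R : realType) (e g : R) loss s p : Fv e g loss 0 s p = p ord0.
Proof.
rewrite /Fv (bigD1 [tuple]) //= big1 ?addr0 ?mul1r // => h.
by rewrite [h]tuple0 => /negP[].
Qed.

Lemma FvS (R : realType) (e g : R) loss n s p :
  Fv e g loss n.+1 s p = \sum_(i < 2) wsu_tilde g p i *
       Fv e g loss n s.+1 (wsu_update e g (loss s) p i).
Proof.
rewrite /Fv (reindex (fun x : 'I_2 * n.-tuple 'I_2 => [tuple of x.1 :: x.2])) /=.
  rewrite -(pair_big xpredT xpredT (fun i (h : n.-tuple 'I_2) => 
     (wsu_run e g loss s p [tuple of i :: h]).1 *
     (wsu_run e g loss s p [tuple of i :: h]).2 ord0)) /=.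
  apply: eq_bigr => i _; rewrite big_distrr /=; apply: eq_bigr => h _.
  by rewrite mulrA.
exists (fun t : n.+1.-tuple 'I_2 => (thead t, [tuple of behead t])) => [[i h] _|t _] /=.
  by congr (_, _); apply: val_inj.
by rewrite [in RHS](tuple_eta t).
Qed.

Lemma Fv_bound (R : realType) (e g : R) (loss : nat -> 'I_2 -> R) n :
  0 < e -> 0 < g -> g < 1/2 -> e * 2%:R / g <= 1/2 ->
  forall s p, (forall r, (s <= r)%N -> (r < s + n)%N -> loss r ord0 = 1 /\ loss r ord_max = 0) ->
  Inv p -> Fv e g loss n s p <= p ord0 * (1 - e/2) ^+ n.
Proof.
move=> e0 g0 g1 eg; elim: n => [|n IH] s p Hl Hp.
  by rewrite Fv0 expr0 mulr1.
rewrite FvS sum2.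
have hs : (s < s + n.+1)%N by rewrite addnS ltnS leq_addr.
have [l0 l1] := Hl s (leqnn s) hs.
have Hl' : forall r, (s.+1 <= r)%N -> (r < s.+1 + n)%N -> loss r ord0 = 1 /\ loss r ord_max = 0.
  by move=> r h1 h2; apply: Hl; [exact: ltnW | rewrite addnS -addSn].
have [Hp' _] := inv_step l0 l1 e0 g0 g1 eg Hp.
have ht0 := t0_pos e0 g0 g1 eg Hp.
have hex := exp_step l0 l1 e0 g0 g1 eg Hp.
have ht1 : 0 <= wsu_tilde g p ord_max.
  case: Hp => /andP[Ha Hb] Hs; rewrite /wsu_tilde.
  have : 0 <= (1 - g) * p ord_max by apply: mulr_ge0; lra.
  lra.
have hc : 0 <= (1 - e/2) ^+ n.
  apply: exprn_ge0; move: eg; rewrite ler_pdivrMr // => h; lra.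
have B0 := IH s.+1 _ Hl' Hp'.
have B1 := IH s.+1 _ Hl' Hp.
rewrite upd_1 // in hex *.
have t0p : 0 <= wsu_tilde g p ord0 by lra.
apply: le_trans (lerD (ler_wpM2l t0p B0) (ler_wpM2l ht1 B1)) _.
rewrite !mulrA -mulrDl hex exprS mulrA.
apply: ler_wpM2r => //.
case: Hp => /andP[Ha Hb] Hs.
have : 0 <= e * p ord0 by apply: mulr_ge0; lra.
nra.
Qed.
Lemma bern (R : realType) (x : R) m : 0 <= x -> 1 + m%:R * x <= (1 + x) ^+ m.
Proof.
move=> hx; elim: m => [|m IH]; first by rewrite mul0r addr0 expr0.
rewrite exprS -natr1.
have : 0 <= m%:R * x by apply: mulr_ge0.
have : 0 <= (m%:R : R) by [].
nra.
Qed.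

Lemma asym (R : realType) (e : R) (T n : nat) : 0 < e < 1/2 ->
  1 <= e ^+ 3 * T%:R ^+ 2 -> 64 * (2400%:R : R) ^+ 6 <= T%:R -> (2400 <= T)%N ->
  (T <= 200 * n.+1)%N ->
  (1 - e/2) ^+ n * T%:R <= 1.
Proof.
move=> /andP[e0 e1] he hTr hT2400 hn.
set m := (n %/ 6)%N.
have hm : (T <= 2400 * m)%N.
  have := divn_eq n 6; have := ltn_pmod n (isT : (0 < 6)%N); rewrite -/m. lia.
have hmr : T%:R <= (2400%:R : R) * m%:R by rewrite -natrM ler_nat.
have a0 : 0 < (2400%:R : R) by rewrite ltr0n.
move: hTr hmr a0; generalize (2400%:R : R) => a hTr hmr a0.
set x := e / 2.
have x0 : 0 <= x by rewrite /x; lra.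
have x1 : x <= 1 by rewrite /x; lra.
have hpow : T%:R <= (1 + x) ^+ n.
  have h1 : (1 + x) ^+ (m * 6) <= (1 + x) ^+ n.
    apply: ler_weXn2l; first by lra.
    by rewrite /m leq_trunc_div.
  apply: le_trans h1; rewrite exprM.
  have hb := @bern R x m x0.
  have hmx : 0 <= m%:R * x by apply: mulr_ge0.
  have h2 : (m%:R * x) ^+ 6 <= ((1 + x) ^+ m) ^+ 6.
    apply: lerXn2r; rewrite ?nnegrE //; lra.
  apply: le_trans h2.
  rewrite exprMn.
  set M := (m%:R : R) ^+ 6.
  have hMA : T%:R ^+ 6 <= M * a ^+ 6.
    rewrite /M -exprMn mulrC; apply: lerXn2r; rewrite ?nnegrE //.
    by apply: mulr_ge0 => //; lra.
  have T0 : 0 < T%:R :> R by rewrite ltr0n; exact: leq_trans hT2400.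
  have hM : 64 * T%:R ^+ 5 <= M.
    have hA : 0 < a ^+ 6 by apply: exprn_gt0.
    rewrite -(ler_pM2r hA).
    apply: le_trans hMA.
    rewrite (_ : T%:R ^+ 6 = T%:R ^+ 5 * T%:R :> R); last by rewrite exprSr.
    have : 0 <= T%:R ^+ 5 :> R by apply: exprn_ge0; lra.
    nra.
  have hX : 1 <= 64 * (x ^+ 3) ^+ 2 * T%:R ^+ 4.
    have h8 : 1 <= 8 * x ^+ 3 * T%:R ^+ 2.
      by move: he; rewrite /x !exprS expr0; nra.
    have : 0 <= 8 * x ^+ 3 * T%:R ^+ 2 by lra.
    have -> : 64 * (x ^+ 3) ^+ 2 * T%:R ^+ 4 = (8 * x ^+ 3 * T%:R ^+ 2) ^+ 2 by ring.
    rewrite expr2; nra.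
  rewrite (_ : x ^+ 6 = (x ^+ 3) ^+ 2); last by rewrite -exprM.
  have hX2 : 0 <= (x ^+ 3) ^+ 2 by apply: exprn_ge0; apply: exprn_ge0.
  have hT5 : 0 <= T%:R ^+ 5 :> R by apply: exprn_ge0; lra.
  have : T%:R * (64 * (x ^+ 3) ^+ 2 * T%:R ^+ 4) = 64 * T%:R ^+ 5 * (x ^+ 3) ^+ 2 by ring.
  nra.
have hq : 0 <= (1 - x) ^+ n by apply: exprn_ge0; lra.
have hprod : (1 - x) ^+ n * (1 + x) ^+ n <= 1.
  rewrite -exprMn; apply: exprn_ile1; nra.
nra.
Qed.

Lemma pow_bound (R : realType) (T : nat) (e : R) : (0 < T)%N ->
  T%:R `^ (- (2 / 3)) <= e -> 1 <= e ^+ 3 * T%:R ^+ 2.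
Proof.
move=> hT he.
have T0 : 0 < T%:R :> R by rewrite ltr0n.
set z := (T%:R : R) `^ (- (2 / 3)).
have z0 : 0 <= z by apply: powR_ge0.
have hz : z ^+ 3 = (T%:R ^+ 2)^-1.
  rewrite -powR_mulrn // /z -powRrM.
  have -> : - (2 / 3) * 3%:R = - (2%:R) :> R by field.
  by rewrite powRN powR_mulrn // ltW.
have h3 : z ^+ 3 <= e ^+ 3 by apply: lerXn2r; rewrite ?nnegrE //; exact: le_trans z0 he.
rewrite hz in h3.
have T2 : 0 < T%:R ^+ 2 :> R by apply: exprn_gt0.
rewrite -(ler_pM2r T2) mulVf ?gt_eqF // in h3.
Qed.

Theorem mainTheorem13 (R : realType) (eta gamma : nat -> R) :
  (forall T : nat, (0 < T)%N -> (100 %| T)%N ->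
     wsu_valid 2 (eta T) (gamma T) /\ wsu_nontrivial T (eta T) (gamma T)) ->
  exists T0 : nat, forall T : nat, (T0 <= T)%N -> (0 < T)%N -> (100 %| T)%N ->
    forall t : nat,
      ((T %/ 100)%:R / 2 <= t%:R :> R) -> (t <= T %/ 100)%N ->
      wsu_expected_weight (eta T) (gamma T) (two_phase_loss R T) t ord0
        <= 1 / (2 * T)%:R.
Proof.
move=> H; exists (4800 ^ 6)%N => T hT0 hT hdiv t ht htle.
have [[/andP[e0 e1] /andP[g0 g1] eg] [hne hng]] := H T hT hdiv.
have h2400 : (2400 <= T)%N.
  apply: leq_trans hT0; rewrite expnS.
  apply: (@leq_trans 4800); first by [].
  by apply: leq_pmulr; rewrite expn_gt0.
have hTr : 64 * (2400%:R : R) ^+ 6 <= T%:R.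
  have h := hT0; rewrite -(ler_nat R) natrX in h.
  have h48 : (4800%:R : R) = 2%:R * 2400%:R by rewrite -natrM.
  rewrite h48 in h; move: h; generalize (2400%:R : R) => a h.
  by have <- : (2%:R * a) ^+ 6 = 64 * a ^+ 6 by ring.
clear hT0.
have he3 := pow_bound hT hne.
have ht2 : (T %/ 100 <= 2 * t)%N.
  rewrite -(ler_nat R) natrM; move: ht; rewrite ler_pdivrMr ?ltr0n // => h.
  lra.
have hT200 : (T <= 200 * t)%N.
  have := divnK hdiv; move: ht2; generalize (T %/ 100)%N => q; clear -q; lia.
have t0 : (0 < t)%N by move: hT hT200; clear; lia.
have e01 : 0 < eta T < 1/2 by rewrite e0 e1.
have hasym := asym (n := t.-1) e01 he3 hTr h2400.
have hT200' : (T <= 200 * (t.-1).+1)%N by rewrite prednK.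
have {}hasym := hasym hT200'.
have -> : wsu_expected_weight (eta T) (gamma T) (two_phase_loss R T) t ord0
   = Fv (eta T) (gamma T) (two_phase_loss R T) t.-1 1 (wsu_init R 2) by [].
have hinit : Inv (wsu_init R 2).
  rewrite /Inv /wsu_init !ffunE; split; [apply/andP; split|]; lra.
have hl : forall r, (1 <= r)%N -> (r < 1 + t.-1)%N ->
    two_phase_loss R T r ord0 = 1 /\ two_phase_loss R T r ord_max = 0.
  move=> r h1 h2; have hr : (r <= T %/ 100)%N.
    by move: h2 htle t0; clear; lia.
  by rewrite /two_phase_loss hr.
have B := Fv_bound e0 g0 g1 eg hl hinit.
apply: le_trans B _.
rewrite /wsu_init ffunE natrM.
have T0 : 0 < T%:R :> R by rewrite ltr0n.
rewrite ler_pdivlMr; last by apply: mulr_gt0; lra.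
have hc : 0 <= (1 - eta T / 2) ^+ t.-1 by apply: exprn_ge0; lra.
have -> : 1 / 2%:R * (1 - eta T / 2) ^+ t.-1 * (2%:R * T%:R)
   = (1 - eta T / 2) ^+ t.-1 * T%:R by field.
exact: hasym.
Qed.
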